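(* Let $d \ge 2$ be an integer and, for $\nu > 0$, let $h_1(\nu;d) = (\nu+1)^2 + 4 \nu^2 (d-1)$ and $$h_2(\nu;d) = \frac{(\nu + 1) \sqrt{h_1(\nu;d)} - (\nu+1)^2}{4 \nu^2 (d-1)} - \frac{1}{2}.$$ Then $\sup_{\nu > 0} h_2(\nu;d) = \lim_{\nu \to 0^+} h_2(\nu;d) = 0$. *)

(* Defs.v *)
From HB Require Import structures.
From mathcomp Require Import all_boot all_order all_algebra.
From mathcomp Require Import all_classical all_reals all_analysis.
Set Implicit Arguments. Unset Strict Implicit. Unset Printing Implicit Defensive.
Import Order.TTheory GRing.Theory Num.Theory.
Import numFieldNormedType.Exports.
Local Open Scope classical_set_scope.
Local Open Scope ring_scope.

Definition h1 {R : realType} (d : nat) (nu : R) : R :=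
  (nu + 1) ^+ 2 + 4 * nu ^+ 2 * (d%:R - 1).

Definition h2 {R : realType} (d : nat) (nu : R) : R :=
  ((nu + 1) * Num.sqrt (h1 d nu) - (nu + 1) ^+ 2) / (4 * nu ^+ 2 * (d%:R - 1))
  - 1 / 2.

(* Main.v *)
Require Import Defs.
From HB Require Import structures.
From mathcomp Require Import all_boot all_order all_algebra.
From mathcomp Require Import all_classical all_reals all_analysis.
From mathcomp Require Import lra ring.
Import Order.TTheory GRing.Theory Num.Theory.
Import numFieldNormedType.Exports.
Local Open Scope classical_set_scope.
Local Open Scope ring_scope.

Definition gg {R : realType} (d : nat) (x : R) : R :=
  (x + 1) / (Num.sqrt (h1 d x) + (x + 1)) - 1 / 2.

Lemma h2_gg (R : realType) (d : nat) (hd : (2 <= d)%N) (x : R) :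
  0 < x -> h2 d x = gg d x.
Proof.
move=> x0.
have d1 : 0 < d%:R - 1 :> R.
  by rewrite subr_gt0 (_ : 1 = 1%:R) // ltr_nat.
have c0 : 0 < 4 * x ^+ 2 * (d%:R - 1) by rewrite !mulr_gt0 // exprn_gt0.
set a := x + 1.
have a0 : 0 < a by rewrite /a; lra.
set s := Num.sqrt (h1 d x).
have hs : s ^+ 2 = a ^+ 2 + 4 * x ^+ 2 * (d%:R - 1).
  rewrite /s sqr_sqrtr // /h1 -/a; apply: addr_ge0; first exact: sqr_ge0.
  exact: ltW.
have s0 : 0 <= s by exact: sqrtr_ge0.
rewrite /h2 /gg -/a -/s.
have -> : 4 * x ^+ 2 * (d%:R - 1) = s ^+ 2 - a ^+ 2 by rewrite hs; ring.
have sa : a < s.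
  have : a ^+ 2 < s ^+ 2 by rewrite hs; lra.
  by rewrite ltr_pXn2r // ?nnegrE // ltW.
congr (_ - _).
have h1' : s + a != 0 by rewrite gt_eqF //; lra.
have h2' : s ^+ 2 - a ^+ 2 != 0.
  by rewrite gt_eqF // subr_gt0 ltr_pXn2r // ?nnegrE // ltW.
have e : s ^+ 2 - a ^+ 2 = (s - a) * (s + a) by ring.
have h3 : s - a != 0 by rewrite gt_eqF // subr_gt0.
rewrite e; field.
by rewrite h3 h1'.
Qed.

Lemma gg_lt0 (R : realType) (d : nat) (hd : (2 <= d)%N) (x : R) :
  0 < x -> gg d x < 0.
Proof.
move=> x0.
have d1 : 0 < d%:R - 1 :> R.
  by rewrite subr_gt0 (_ : 1 = 1%:R) // ltr_nat.
have c0 : 0 < 4 * x ^+ 2 * (d%:R - 1) by rewrite !mulr_gt0 // exprn_gt0.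
set a := x + 1.
have a0 : 0 < a by rewrite /a; lra.
set s := Num.sqrt (h1 d x).
have hs : s ^+ 2 = a ^+ 2 + 4 * x ^+ 2 * (d%:R - 1).
  rewrite /s sqr_sqrtr // /h1 -/a; apply: addr_ge0; first exact: sqr_ge0.
  exact: ltW.
have s0 : 0 <= s by exact: sqrtr_ge0.
have sa : a < s.
  have : a ^+ 2 < s ^+ 2 by rewrite hs; lra.
  by rewrite ltr_pXn2r // ?nnegrE // ltW.
rewrite /gg -/a -/s subr_lt0 ltr_pdivrMr; last lra.
lra.
Qed.

Lemma gg_cvg (R : realType) (d : nat) :
  gg d x @[x --> (0 : R)] --> (0 : R).
Proof.
have Hh : h1 d x @[x --> (0:R)] --> (1:R).
  rewrite (_ : 1 = h1 d 0); last by rewrite /h1; ring.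
  rewrite /h1; apply: cvgD.
    by rewrite expr2; apply: cvgM; apply: cvgD => //; exact: cvg_cst.
  apply: cvgM; last exact: cvg_cst.
  apply: cvgM; first exact: cvg_cst.
  by rewrite expr2; apply: cvgM.
have Hs : Num.sqrt (h1 d x) @[x --> (0:R)] --> (1:R).
  rewrite -[X in _ --> X]sqrtr1.
  exact: (continuous_cvg _ (@sqrt_continuous R 1) Hh).
have Ha : x + 1 @[x --> (0:R)] --> (1:R).
  by rewrite -[X in _ --> X]add0r; apply: cvgD => //; exact: cvg_cst.
have Hi : (Num.sqrt (h1 d x) + (x + 1))^-1 @[x --> (0:R)] --> ((1:R) + 1)^-1.
  apply: (cvgV _ (cvgD Hs Ha)).
  by rewrite (_ : (1:R) + 1 = 2) ?pnatr_eq0 //.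
have H := cvgB (cvgM Ha Hi) (cvg_cst (1 / 2 : R)).
rewrite (_ : 1 * (1 + 1)^-1 - 1 / 2 = 0 :> R) in H; last by field.
exact: H.
Qed.

Theorem lemma5 (R : realType) (d : nat) (hd : (2 <= d)%N) :
  let S := [set h2 d nu | nu in [set nu : R | 0 < nu]] in
  [/\ has_sup S, sup S = 0 & h2 d x @[x --> (0 : R)^'+] --> (0 : R)].
Proof.
move=> S.
have ub : ubound S 0.
  move=> _ [x /= x0 <-]; rewrite h2_gg //; apply: ltW; exact: gg_lt0.
have ne : S !=set0 by exists (h2 d 1); exists 1 => //=; exact: ltr01.
have hsup : has_sup S by split => //; exists 0.
have lim : h2 d x @[x --> (0 : R)^'+] --> (0 : R).
  have Hg : gg d x @[x --> (0:R)^'+] --> (0:R).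
    by apply: cvg_within_filter; exact: gg_cvg.
  apply: cvg_trans Hg.
  apply: near_eq_cvg; near=> x.
  rewrite h2_gg //; near: x; exact: nbhs_right_gt.
split => //.
apply/eqP; rewrite eq_le ge_sup //=.
rewrite leNgt; apply/negP => sneg.
have : \forall x \near (0:R)^'+, 0 < x /\ `|0 - h2 d x| < - sup S.
  near=> y; split; first by near: y; exact: nbhs_right_gt.
  near: y; by move/cvgrPdist_lt : lim; apply; rewrite oppr_gt0.
move=> /filter_ex [x [x0 hx]].
have hh : h2 d x <= sup S by apply: sup_upper_bound => //; exists x.
move: hx; rewrite sub0r normrN => hx.
have hn := ler_norm (- h2 d x); rewrite normrN in hn.
move: hx sneg hh hn. generalize (sup S) (h2 d x) => t u. lra.
Unshelve. all: by end_near.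
Qed.
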